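(* Consider Problem 2 (defined in the context) with $k_1>k_2$ and $\bar P\ge F k_2$. Let $M=\left\lfloor\frac{\bar P-Fk_2}{k_1-k_2}\right\rfloor$. (i) If $B_3>B_2$, an optimal solution is $$X_1=\min\left\{\left\lfloor\tfrac{C}{I^S}\right\rfloor,\ F,\ M\right\},\quad X_2=\max\left\{0,\ \min\{F,M\}-X_1\right\},\quad X_3=F-X_1-X_2,$$ and the optimal value is $B^*=B_2X_2+B_3X_3$. (ii) If $B_3\le B_2$, an optimal solution is $$X_1=\min\left\{\left\lfloor\tfrac{C}{I^S}\right\rfloor,\ F,\ M\right\},\quad X_2=0,\quad X_3=F-X_1,$$ and the optimal value is $B^*=B_3X_3$.
   Context: Problem 2: Given a positive integer $F$ (number of equally popular tasks), reals $I^S>0$ (remote input data size per task), $C\ge 0$ (cache size), $\bar P$ (average power budget), $k_1>0$ and $k_2>0$ (average power consumed per task by local computing and by uplink transmission for MEC computing, respectively), $B_1=0$, and $B_2,B_3>0$ (the minimum bandwidths per task for route 2 ''local computing without local caching'' and route 3 ''MEC computing''; route 1 is ''local computing with local caching''), minimize $X_1B_1+X_2B_2+X_3B_3$ over nonnegative integers $X_1,X_2,X_3$ (numbers of tasks served via routes 1, 2, 3) subject to $I^SX_1\le C$, $k_1(X_1+X_2)+k_2X_3\le\bar P$, and $X_1+X_2+X_3=F$. $\lfloor\cdot\rfloor$ denotes the floor function. *)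

(* Defs.v *)
From Stdlib Require Import Reals Lra Lia ZArith Arith.
Open Scope R_scope.

(* Floor of a real number, as an integer. Stdlib's Int_part r = up r - 1 is
   exactly the floor of r. *)
Definition floorZ (x : R) : Z := Int_part x.

Definition floor_nat (x : R) : nat := Z.to_nat (floorZ x).

Definition feasible (F : nat) (IS C Pbar k1 k2 : R) (X1 X2 X3 : nat) : Prop :=
  IS * INR X1 <= C /\
  k1 * (INR X1 + INR X2) + k2 * INR X3 <= Pbar /\
  (X1 + X2 + X3)%nat = F.

Definition objective (B1 B2 B3 : R) (X1 X2 X3 : nat) : R :=
  INR X1 * B1 + INR X2 * B2 + INR X3 * B3.

Definition optimal (F : nat) (IS C Pbar k1 k2 B1 B2 B3 : R) (X1 X2 X3 : nat) : Prop :=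
  feasible F IS C Pbar k1 k2 X1 X2 X3 /\
  forall Y1 Y2 Y3 : nat, feasible F IS C Pbar k1 k2 Y1 Y2 Y3 ->
    objective B1 B2 B3 X1 X2 X3 <= objective B1 B2 B3 Y1 Y2 Y3.

(* Main.v *)
Require Import Defs.
From Stdlib Require Import Reals Lra Lia ZArith Arith.
Open Scope R_scope.

Lemma fl_le x : 0 <= x -> INR (floor_nat x) <= x.
Proof.
  intros Hx. unfold floor_nat, floorZ.
  destruct (base_Int_part x) as [H1 H2].
  assert (H0 : (0 <= Int_part x)%Z).
  { assert (IZR (Int_part x) > -1) by lra.
    assert (-1 < Int_part x)%Z by (apply lt_IZR; lra). lia. }
  rewrite INR_IZR_INZ, Z2Nat.id by exact H0. exact H1.
Qed.

Lemma fl_ge (n : nat) x : INR n <= x -> (n <= floor_nat x)%nat.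
Proof.
  intros Hx. unfold floor_nat, floorZ.
  destruct (base_Int_part x) as [H1 H2].
  rewrite INR_IZR_INZ in Hx.
  assert (Z.of_nat n - 1 < Int_part x)%Z.
  { apply lt_IZR. rewrite minus_IZR. simpl. lra. }
  lia.
Qed.

Theorem theorem1 (F : nat) (IS C Pbar k1 k2 B1 B2 B3 : R)
  (hF : (0 < F)%nat) (hIS : 0 < IS) (hC : 0 <= C)
  (hk1 : 0 < k1) (hk2 : 0 < k2) (hB1 : B1 = 0) (hB2 : 0 < B2) (hB3 : 0 < B3)
  (hk12 : k1 > k2) (hP : Pbar >= INR F * k2) :
  let M := floor_nat ((Pbar - INR F * k2) / (k1 - k2)) in
  let X1 := Nat.min (floor_nat (C / IS)) (Nat.min F M) in
  (B3 > B2 ->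
     let X2 := Nat.max 0 (Nat.min F M - X1) in
     let X3 := (F - X1 - X2)%nat in
     optimal F IS C Pbar k1 k2 B1 B2 B3 X1 X2 X3 /\
     objective B1 B2 B3 X1 X2 X3 = B2 * INR X2 + B3 * INR X3) /\
  (B3 <= B2 ->
     let X2 := 0%nat in
     let X3 := (F - X1)%nat in
     optimal F IS C Pbar k1 k2 B1 B2 B3 X1 X2 X3 /\
     objective B1 B2 B3 X1 X2 X3 = B3 * INR X3).
Proof.
  intros M X1.
  set (c := floor_nat (C / IS)) in *.
  assert (HdP : 0 <= (Pbar - INR F * k2) / (k1 - k2)).
  { unfold Rdiv; apply Rmult_le_pos; [lra|left; apply Rinv_0_lt_compat; lra]. }
  assert (HM : INR M * (k1 - k2) <= Pbar - INR F * k2).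
  { pose proof (fl_le _ HdP) as H. fold M in H.
    apply Rmult_le_compat_r with (r := k1 - k2) in H; [|lra].
    field_simplify in H; lra. }
  assert (Hc : IS * INR c <= C).
  { assert (0 <= C / IS) by (unfold Rdiv; apply Rmult_le_pos; [lra|left; apply Rinv_0_lt_compat; lra]).
    pose proof (fl_le _ H) as H'. fold c in H'.
    apply Rmult_le_compat_l with (r := IS) in H'; [|lra].
    field_simplify in H'; lra. }
  assert (HX1c : (X1 <= c)%nat) by (unfold X1; lia).
  assert (HX1m : (X1 <= Nat.min F M)%nat) by (unfold X1; lia).
  assert (Hcache : IS * INR X1 <= C).
  { apply le_INR in HX1c. nra. }
  assert (Hfeas : forall Y1 Y2 Y3, feasible F IS C Pbar k1 k2 Y1 Y2 Y3 ->
            (Y1 <= X1)%nat /\ (Y1 + Y2 <= Nat.min F M)%nat).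
  { intros Y1 Y2 Y3 [H1 [H2 H3]].
    assert (HY1 : (Y1 <= c)%nat).
    { apply fl_ge. apply Rmult_le_reg_l with IS; [lra|].
      field_simplify; lra. }
    assert (HYM : (Y1 + Y2 <= M)%nat).
    { apply fl_ge. apply Rmult_le_reg_l with (k1 - k2); [lra|].
      field_simplify; [|lra].
      assert (INR F = INR Y1 + INR Y2 + INR Y3) by (rewrite <- H3, !plus_INR; ring).
      rewrite plus_INR. nra. }
    unfold X1; lia. }
  split.
  - intros HB X2 X3.
    assert (HS : (X1 + X2 = Nat.min F M)%nat) by (unfold X2; lia).
    assert (HF3 : (X1 + X2 + X3 = F)%nat) by (unfold X3; lia).
    assert (EF : INR F = INR X1 + INR X2 + INR X3) by (rewrite <- HF3, !plus_INR; ring).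
    assert (Em : INR (Nat.min F M) = INR X1 + INR X2) by (rewrite <- HS, plus_INR; ring).
    assert (HmM : INR (Nat.min F M) <= INR M) by (apply le_INR; lia).
    split; [split|].
    + split; [exact Hcache|split; [|exact HF3]].
      nra.
    + intros Y1 Y2 Y3 HY. destruct (Hfeas _ _ _ HY) as [A1 A2].
      destruct HY as [_ [_ HY3]].
      assert (EY : INR F = INR Y1 + INR Y2 + INR Y3) by (rewrite <- HY3, !plus_INR; ring).
      apply le_INR in A1. apply le_INR in A2. rewrite plus_INR in A2.
      unfold objective. subst B1.
      assert (0 <= (B3 - B2) * (INR (Nat.min F M) - (INR Y1 + INR Y2))) by (apply Rmult_le_pos; lra).
      assert (0 <= B2 * (INR X1 - INR Y1)) by (apply Rmult_le_pos; lra).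
      nra.
    + unfold objective; subst B1; ring.
  - intros HB X2 X3.
    assert (HF3 : (X1 + X2 + X3 = F)%nat) by (unfold X3, X2; lia).
    assert (EF : INR F = INR X1 + INR X2 + INR X3) by (rewrite <- HF3, !plus_INR; ring).
    assert (HmM : INR X1 <= INR M) by (apply le_INR; lia).
    assert (E2 : INR X2 = 0) by reflexivity.
    split; [split|].
    + split; [exact Hcache|split; [|exact HF3]].
      nra.
    + intros Y1 Y2 Y3 HY. destruct (Hfeas _ _ _ HY) as [A1 A2].
      destruct HY as [_ [_ HY3]].
      assert (EY : INR F = INR Y1 + INR Y2 + INR Y3) by (rewrite <- HY3, !plus_INR; ring).
      apply le_INR in A1.
      assert (0 <= INR Y2) by apply pos_INR.
      unfold objective. subst B1.
      assert (0 <= (B2 - B3) * INR Y2) by (apply Rmult_le_pos; lra).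
      assert (0 <= B3 * (INR X1 - INR Y1)) by (apply Rmult_le_pos; lra).
      nra.
    + unfold objective; subst B1. rewrite E2. ring.
Qed.
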